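(* Let $X$ be a shift space, let $n\ge1$, $m\ge0$, and let $V\subseteq\mathcal L(X)$ be a finite $X$-maximal prefix code. If $\mathcal E_{\mathcal L_n(X),V}(w)$ is a tree for every $w\in\mathcal L_{\ge m}(X)$, then for every $w\in\mathcal L_{\ge m}(X)$ and every $\ell\in\mathcal L_{\ge n-1}(X)$ with $\ell w\in\mathcal L(X)$, the graph $\mathcal E_{A,V}(\ell w)$ is a tree.
   Context: $A$ is a finite alphabet; a shift space is a closed shift-invariant subset $X\subseteq A^{\mathbb Z}$; $\mathcal L(X)$ is its set of finite factors, $\mathcal L_n(X)=\mathcal L(X)\cap A^n$, $\mathcal L_{\ge n}(X)=\bigcup_{k\ge n}\mathcal L_k(X)$. A prefix code is a set of words none of which is a proper prefix of another; a prefix code $V\subseteq\mathcal L(X)$ is $X$-maximal if it is not properly contained in a prefix code contained in $\mathcal L(X)$. For $U,V\subseteq A^*$ and $w\in\mathcal L(X)$, let $L_U(w)=\{u\in U: uw\in\mathcal L(X)\}$ and $R_V(w)=\{v\in V: wv\in\mathcal L(X)\}$; the generalized extension graph $\mathcal E_{U,V}(w)$ is the undirected bipartite graph with vertex set the disjoint union of $L_U(w)$ and $R_V(w)$ and an edge $(u,v)$ iff $uwv\in\mathcal L(X)$. (Here $A$ denotes the set of one-letter words.) *)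

(* Defs.v *)
From HB Require Import structures.
From mathcomp Require Import all_boot all_order all_algebra.
Set Implicit Arguments. Unset Strict Implicit. Unset Printing Implicit Defensive.
Import GRing.Theory Num.Theory.

Definition window (A : Type) (x : int -> A) (i : int) (n : nat) : seq A :=
  mkseq (fun k => x (i + k%:Z)%R) n.

Definition shift (A : Type) (x : int -> A) : int -> A := fun i => x (i + 1)%R.

Definition shift_invariant (A : Type) (X : (int -> A) -> Prop) : Prop :=
  forall x : int -> A, X x <-> X (shift x).

(* X is closed in the product topology: x lies in X as soon as every
   central window x_[-n, n] agrees with some point of X. *)
Definition closed_shift (A : Type) (X : (int -> A) -> Prop) : Prop :=
  forall x : int -> A,
    (forall n : nat, exists y, X y /\ forall i : int, (`|i| <= n%:Z)%R -> y i = x i) ->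
    X x.

Definition shift_space (A : finType) (X : (int -> A) -> Prop) : Prop :=
  shift_invariant X /\ closed_shift X.

Definition inL (A : Type) (X : (int -> A) -> Prop) (w : seq A) : Prop :=
  exists x, X x /\ exists i : int, w = window x i (size w).

Definition Ln (A : Type) (X : (int -> A) -> Prop) (n : nat) (w : seq A) : Prop :=
  inL X w /\ size w = n.

(* The alphabet A viewed as the set of one-letter words *)
Definition letters (A : Type) (w : seq A) : Prop := size w = 1%N.

Definition prefix_code (A : eqType) (W : seq A -> Prop) : Prop :=
  forall u v, W u -> W v -> prefix u v -> u = v.

Definition X_maximal_prefix_code (A : finType) (X : (int -> A) -> Prop)
  (V : seq (seq A)) : Prop :=
  prefix_code (fun v => v \in V) /\ (forall v, v \in V -> inL X v) /\
  forall W : seq A -> Prop,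
    prefix_code W -> (forall w, W w -> inL X w) ->
    (forall v, v \in V -> W v) -> forall w, W w -> w \in V.

(* vertices: inl u for u in L_U(w), inr v for v in R_V(w) (disjoint union) *)
Definition ext_vertex (A : Type) (X : (int -> A) -> Prop) (U V : seq A -> Prop)
  (w : seq A) (a : seq A + seq A) : Prop :=
  match a with
  | inl u => U u /\ inL X (u ++ w)
  | inr v => V v /\ inL X (w ++ v)
  end.

Definition ext_edge (A : Type) (X : (int -> A) -> Prop) (U V : seq A -> Prop)
  (w : seq A) (a b : seq A + seq A) : Prop :=
  ext_vertex X U V w a /\ ext_vertex X U V w b /\
  match a, b with
  | inl u, inr v => inL X (u ++ w ++ v)
  | inr v, inl u => inL X (u ++ w ++ v)
  | _, _ => False
  end.

Fixpoint walk (T : Type) (adj : T -> T -> Prop) (a : T) (p : seq T) : Prop :=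
  match p with
  | [::] => True
  | b :: p' => adj a b /\ walk adj b p'
  end.

Definition connected_graph (T : Type) (vert : T -> Prop) (adj : T -> T -> Prop) : Prop :=
  forall a b, vert a -> vert b -> exists p, walk adj a p /\ last a p = b.

(* a cycle: distinct vertices x0 ... x_{k-1}, k >= 3, consecutive adjacent,
   and x_{k-1} adjacent to x0 *)
Definition has_cycle (T : eqType) (adj : T -> T -> Prop) : Prop :=
  exists (x : T) (c : seq T),
    (2 <= size c)%N /\ uniq (x :: c) /\ walk adj x c /\ adj (last x c) x.

Definition is_tree (T : eqType) (vert : T -> Prop) (adj : T -> T -> Prop) : Prop :=
  (exists a, vert a) /\ connected_graph vert adj /\ ~ has_cycle adj.

Definition ext_graph_is_tree (A : finType) (X : (int -> A) -> Prop)
  (U V : seq A -> Prop) (w : seq A) : Prop :=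
  is_tree (ext_vertex X U V w) (ext_edge X U V w).

(* Main.v *)
Require Import Defs.
From HB Require Import structures.
From mathcomp Require Import all_boot all_order all_algebra.
Set Implicit Arguments. Unset Strict Implicit. Unset Printing Implicit Defensive.
Import GRing.Theory Num.Theory.

Lemma size_window (A : Type) (x : int -> A) i k : size (window x i k) = k.
Proof. by rewrite /window size_mkseq. Qed.

Lemma window_cat (A : Type) (x : int -> A) i a b :
  window x i (a + b) = window x i a ++ window x (i + a%:Z)%R b.
Proof.
rewrite /window /mkseq iotaD map_cat; congr (_ ++ _).
rewrite add0n -{1}(addn0 a) iotaDl -map_comp; apply: eq_map => k /=.
by rewrite PoszD addrA.
Qed.

Lemma window_split (A : eqType) (x : int -> A) i (s t : seq A) :
  s ++ t = window x i (size (s ++ t)) ->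
  s = window x i (size s) /\ t = window x (i + (size s)%:Z)%R (size t).
Proof.
rewrite size_cat window_cat => /eqP; rewrite eqseq_cat ?size_window //.
by move=> /andP[/eqP h1 /eqP h2].
Qed.

Lemma inL_cat (A : eqType) (X : (int -> A) -> Prop) (s t : seq A) :
  inL X (s ++ t) -> inL X s /\ inL X t.
Proof.
move=> [x [Xx [i /window_split [h1 h2]]]]; split; exists x; split => //.
  by exists i.
by exists (i + (size s)%:Z)%R.
Qed.

Lemma inL_left (A : Type) (X : (int -> A) -> Prop) (s : seq A) k :
  inL X s -> exists p, size p = k /\ inL X (p ++ s).
Proof.
move=> [x [Xx [i hi]]]; exists (window x (i - k%:Z)%R k); split.
  by rewrite size_window.
exists x; split => //; exists (i - k%:Z)%R.
by rewrite size_cat size_window window_cat subrK -hi.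
Qed.

Lemma walk_map (T U : Type) (adj : T -> T -> Prop) (adj' : U -> U -> Prop) (f : T -> U) :
  (forall a b, adj a b -> adj' (f a) (f b)) ->
  forall a p, walk adj a p -> walk adj' (f a) (map f p).
Proof.
move=> H a p; elim: p a => //= b p IH a [h1 h2]; split; auto.
Qed.

Theorem mainTheorem15 (A : finType) (X : (int -> A) -> Prop)
  (HX : shift_space X) (n m : nat) (V : seq (seq A))
  (Hn : (1 <= n)%N) (HV : X_maximal_prefix_code X V)
  (Htree : forall w : seq A, inL X w -> (m <= size w)%N ->
             ext_graph_is_tree X (Ln X n) (fun v => v \in V) w) :
  forall w l : seq A, inL X w -> (m <= size w)%N ->
    inL X l -> (n - 1 <= size l)%N -> inL X (l ++ w) ->
    ext_graph_is_tree X (@letters A) (fun v => v \in V) (l ++ w).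
Proof.
move=> w l Lw mw Ll nl Llw.
have Hlw : ext_graph_is_tree X (Ln X n) (fun v => v \in V) (l ++ w).
  by apply: Htree Llw _; rewrite size_cat (leq_trans mw (leq_addl _ _)).
set t := take (n - 1) l; set r := drop (n - 1) l.
have ht : l = t ++ r by rewrite cat_take_drop.
have st : size t = (n - 1)%N by rewrite size_takel.
have Lrw : inL X (r ++ w).
  by move: Llw; rewrite {1}ht -catA => /inL_cat[].
have Hrw : ext_graph_is_tree X (Ln X n) (fun v => v \in V) (r ++ w).
  by apply: Htree Lrw _; rewrite size_cat (leq_trans mw (leq_addl _ _)).
split; [|split].
- have [p [sp Lp]] := inL_left 1 Llw.
  by exists (inl p).
- pose f (c : seq A + seq A) : seq A + seq A :=
    match c with inl u => inl (drop (n - 1) u) | inr v => inr v end.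
  have fv : forall c, ext_vertex X (Ln X n) (fun v => v \in V) (l ++ w) c ->
      ext_vertex X (@letters A) (fun v => v \in V) (l ++ w) (f c).
    case=> [u [[_ su] Lu] | v hv] //=; split.
      by rewrite /letters size_drop su subKn.
    by move: Lu; rewrite -{1}(cat_take_drop (n - 1) u) -catA => /inL_cat[].
  have fe : forall a b, ext_edge X (Ln X n) (fun v => v \in V) (l ++ w) a b ->
      ext_edge X (@letters A) (fun v => v \in V) (l ++ w) (f a) (f b).
    move=> a b [va [vb e]]; split; first exact: fv.
    split; first exact: fv.
    case: a b e {va vb} => [u|v] [u'|v'] //= e.
      by move: e; rewrite -{1}(cat_take_drop (n - 1) u) -catA => /inL_cat[].
    by move: e; rewrite -{1}(cat_take_drop (n - 1) u') -catA => /inL_cat[].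
  have lift : forall c, ext_vertex X (@letters A) (fun v => v \in V) (l ++ w) c ->
      exists c', ext_vertex X (Ln X n) (fun v => v \in V) (l ++ w) c' /\ f c' = c.
    case=> [u [su Lu] | v hv].
      have [p [sp Lp]] := inL_left (n - 1) Lu.
      exists (inl (p ++ u)); split; last by rewrite /= drop_size_cat.
      split; last by rewrite -catA.
      split; first by move: Lp; rewrite catA => /inL_cat[].
      by rewrite size_cat sp su addn1 subn1 prednK.
    by exists (inr v).
  move=> a b va vb.
  have [a' [va' <-]] := lift a va; have [b' [vb' <-]] := lift b vb.
  have [p [wp lp]] := Hlw.2.1 a' b' va' vb'.
  exists (map f p); split; first exact: walk_map wp.
  by rewrite last_map lp.
- pose g (c : seq A + seq A) : seq A + seq A :=
    match c with inl u => inl (u ++ t) | inr v => inr v end.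
  have gv : forall c, ext_vertex X (@letters A) (fun v => v \in V) (l ++ w) c ->
      ext_vertex X (Ln X n) (fun v => v \in V) (r ++ w) (g c).
    case=> [u [su Lu] | v [hv Lv]] /=; split => //.
    + split.
        by move: Lu; rewrite {1}ht !catA => /inL_cat[] /inL_cat[].
      by rewrite size_cat su st add1n subn1 prednK.
    + by move: Lu; rewrite {1}ht !catA.
    + by move: Lv; rewrite {1}ht -!catA => /inL_cat[].
  have ge : forall a b, ext_edge X (@letters A) (fun v => v \in V) (l ++ w) a b ->
      ext_edge X (Ln X n) (fun v => v \in V) (r ++ w) (g a) (g b).
    move=> a b [va [vb e]]; split; first exact: gv.
    split; first exact: gv.
    case: a b e {va vb} => [u|v] [u'|v'] //= e.
      by move: e; rewrite {1}ht !catA.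
    by move: e; rewrite {1}ht !catA.
  have ginj : injective g.
    case=> [a|a] [b|b] //= [e]; congr inl.
    have sab : size a = size b.
      by move: (congr1 size e); rewrite !size_cat => /addIn.
    by move/eqP: e; rewrite eqseq_cat // => /andP[/eqP -> _].
  move=> [x [c [sc [uc [wc ec]]]]].
  apply: Hrw.2.2; exists (g x), (map g c); split; first by rewrite size_map.
  split.
    by rewrite -map_cons map_inj_uniq.
  split; first exact: walk_map wc.
  by rewrite last_map; apply: ge.
Qed.
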